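(* For each $\sigma\in\{132,213,312,3142\}$ and every $n\ge 0$, we have $F_n(321,\sigma)=S_n(231,321,\sigma)$.
   Context: A permutation of length $n$ is a rearrangement of $[n]$; $S_n$ is the set of all of them. A permutation $\pi$ avoids a classical pattern $p\in S_k$ if no subsequence of $\pi$ of length $k$ is order-isomorphic to $p$. A Fishburn permutation is a permutation $\pi=\pi_1\cdots\pi_n$ for which there are no indices $i<j$ with $\pi_j<\pi_i<\pi_{i+1}$ and $\pi_i=\pi_j+1$. $F_n(\sigma_1,\dots,\sigma_k)$ denotes the set of Fishburn permutations of length $n$ avoiding each of the classical patterns $\sigma_1,\dots,\sigma_k$, and $S_n(\sigma_1,\dots,\sigma_k)$ the set of all permutations of length $n$ avoiding each $\sigma_i$. *)

(* Defs.v *)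
From mathcomp Require Import all_boot all_order all_fingroup.
Set Implicit Arguments. Unset Strict Implicit. Unset Printing Implicit Defensive.

(* Permutations of [n] are elements of {perm 'I_n}; position i (0-based) holds
   value s i (0-based), i.e. pi_{i+1} = s i + 1. Shifting by one does not
   affect relative order. *)

(* A classical pattern is given in one-line notation as a list of naturals,
   e.g. [:: 3; 2; 1] for 321. *)

Definition contains (n : nat) (s : {perm 'I_n}) (p : seq nat) : bool :=
  [exists f : {ffun 'I_(size p) -> 'I_n},
     [forall a : 'I_(size p), forall b : 'I_(size p),
        ((a < b)%N ==> (f a < f b)%N) &&
        ((s (f a) < s (f b))%N == (nth 0 p a < nth 0 p b)%N)]].

Definition avoids (n : nat) (s : {perm 'I_n}) (p : seq nat) : bool :=
  ~~ contains s p.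

Definition fishburn (n : nat) (s : {perm 'I_n}) : bool :=
  ~~ [exists i : 'I_n, exists j : 'I_n, exists i1 : 'I_n,
       [&& (i < j)%N, (val i1 == (val i).+1),
           (s j < s i)%N, (s i < s i1)%N & (val (s i) == (s j).+1)]].

Definition F_set (n : nat) (ps : seq (seq nat)) : {set {perm 'I_n}} :=
  [set s : {perm 'I_n} | fishburn s && all (avoids s) ps].

Definition S_set (n : nat) (ps : seq (seq nat)) : {set {perm 'I_n}} :=
  [set s : {perm 'I_n} | all (avoids s) ps].

(* Main.v *)
Require Import Defs.
From mathcomp Require Import all_boot all_order all_fingroup.
From mathcomp Require Import zify.
Set Implicit Arguments. Unset Strict Implicit. Unset Printing Implicit Defensive.

Definition g m (s : {perm 'I_m.+1}) (k : nat) : nat := val (s (inord k)).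

Lemma containsP m (s : {perm 'I_m.+1}) p0 p :
  contains s (p0 :: p) <-> exists f : nat -> nat,
    [/\ (forall a, a < (size p).+1 -> f a < m.+1),
        (forall a b, a < (size p).+1 -> b < (size p).+1 -> a < b -> f a < f b) &
        (forall a b, a < (size p).+1 -> b < (size p).+1 ->
           (g s (f a) < g s (f b)) = (nth 0 (p0 :: p) a < nth 0 (p0 :: p) b))].
Proof.
split.
- case/existsP => ff /forallP H.
  exists (fun a => val (ff (inord a))); split.
  + by move=> a _; exact: ltn_ord.
  + move=> a b Ha Hb Hab; have /forallP/(_ (inord b))/andP[/implyP H1 _] := H (inord a).
    by apply: H1; rewrite !inordK.
  + move=> a b Ha Hb; have /forallP/(_ (inord b))/andP[_ /eqP H2] := H (inord a).
    by rewrite /g !inord_val H2 !inordK.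
- case=> f [H1 H2 H3]; apply/existsP.
  exists [ffun a : 'I_(size (p0::p)) => (inord (f a) : 'I_m.+1)].
  apply/forallP => a; apply/forallP => b; rewrite !ffunE.
  apply/andP; split.
  + apply/implyP => hab; rewrite !inordK; [by apply: H2| exact: H1 | exact: H1].
  + by apply/eqP; rewrite -H3.
Qed.

Lemma g_lt m (s : {perm 'I_m.+1}) k : g s k < m.+1.
Proof. exact: ltn_ord. Qed.

Lemma g_inj m (s : {perm 'I_m.+1}) x y : x < m.+1 -> y < m.+1 -> g s x = g s y -> x = y.
Proof.
move=> hx hy /val_inj/perm_inj/(congr1 val) => /=; by rewrite !inordK.
Qed.

Lemma g_surj m (s : {perm 'I_m.+1}) v : v < m.+1 -> exists2 j, j < m.+1 & g s j = v.
Proof.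
move=> hv; exists (val ((s^-1)%g (inord v))); first exact: ltn_ord.
by rewrite /g inord_val permKV; exact: inordK.
Qed.

Lemma c3 m (s : {perm 'I_m.+1}) x y z p0 p1 p2 :
  x < y -> y < z -> z < m.+1 ->
  (g s x < g s y) = (p0 < p1) -> (g s x < g s z) = (p0 < p2) -> (g s y < g s z) = (p1 < p2) ->
  (g s y < g s x) = (p1 < p0) -> (g s z < g s x) = (p2 < p0) -> (g s z < g s y) = (p2 < p1) ->
  contains s [:: p0; p1; p2].
Proof.
move=> h1 h2 h3 e1 e2 e3 e4 e5 e6; apply/containsP.
exists (fun a => nth 0 [:: x; y; z] a); split.
- move=> [|[|[|a]]] //= ?; lia.
- move=> [|[|[|a]]] [|[|[|b]]] //= ? ? ?; lia.
- by move=> [|[|[|a]]] [|[|[|b]]] //= ? ?; rewrite ?ltnn.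
Qed.

Lemma c4 m (s : {perm 'I_m.+1}) x y z w p0 p1 p2 p3 :
  x < y -> y < z -> z < w -> w < m.+1 ->
  (g s x < g s y) = (p0 < p1) -> (g s x < g s z) = (p0 < p2) -> (g s x < g s w) = (p0 < p3) ->
  (g s y < g s z) = (p1 < p2) -> (g s y < g s w) = (p1 < p3) -> (g s z < g s w) = (p2 < p3) ->
  (g s y < g s x) = (p1 < p0) -> (g s z < g s x) = (p2 < p0) -> (g s w < g s x) = (p3 < p0) ->
  (g s z < g s y) = (p2 < p1) -> (g s w < g s y) = (p3 < p1) -> (g s w < g s z) = (p3 < p2) ->
  contains s [:: p0; p1; p2; p3].
Proof.
move=> h1 h2 h3 h4 e1 e2 e3 e4 e5 e6 e7 e8 e9 e10 e11 e12; apply/containsP.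
exists (fun a => nth 0 [:: x; y; z; w] a); split.
- move=> [|[|[|[|a]]]] //= ?; lia.
- move=> [|[|[|[|a]]]] [|[|[|[|b]]]] //= ? ? ?; lia.
- by move=> [|[|[|[|a]]]] [|[|[|[|b]]]] //= ? ?; rewrite ?ltnn.
Qed.

Ltac bsolve := apply/idP/idP; lia.

Lemma c321 m (s : {perm 'I_m.+1}) x y z :
  x < y -> y < z -> z < m.+1 -> g s z < g s y -> g s y < g s x -> contains s [:: 3; 2; 1].
Proof. by move=> *; apply: (c3 (x:=x) (y:=y) (z:=z)) => //; bsolve. Qed.

Lemma c231 m (s : {perm 'I_m.+1}) x y z :
  x < y -> y < z -> z < m.+1 -> g s z < g s x -> g s x < g s y -> contains s [:: 2; 3; 1].
Proof. by move=> *; apply: (c3 (x:=x) (y:=y) (z:=z)) => //; bsolve. Qed.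

Lemma c132 m (s : {perm 'I_m.+1}) x y z :
  x < y -> y < z -> z < m.+1 -> g s x < g s z -> g s z < g s y -> contains s [:: 1; 3; 2].
Proof. by move=> *; apply: (c3 (x:=x) (y:=y) (z:=z)) => //; bsolve. Qed.

Lemma c213 m (s : {perm 'I_m.+1}) x y z :
  x < y -> y < z -> z < m.+1 -> g s y < g s x -> g s x < g s z -> contains s [:: 2; 1; 3].
Proof. by move=> *; apply: (c3 (x:=x) (y:=y) (z:=z)) => //; bsolve. Qed.

Lemma c312 m (s : {perm 'I_m.+1}) x y z :
  x < y -> y < z -> z < m.+1 -> g s y < g s z -> g s z < g s x -> contains s [:: 3; 1; 2].
Proof. by move=> *; apply: (c3 (x:=x) (y:=y) (z:=z)) => //; bsolve. Qed.

Lemma c3142 m (s : {perm 'I_m.+1}) x y z w :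
  x < y -> y < z -> z < w -> w < m.+1 ->
  g s y < g s w -> g s w < g s x -> g s x < g s z -> contains s [:: 3; 1; 4; 2].
Proof. by move=> *; apply: (c4 (x:=x) (y:=y) (z:=z) (w:=w)) => //; bsolve. Qed.

Lemma d231 m (s : {perm 'I_m.+1}) : contains s [:: 2; 3; 1] ->
  exists x y z, [/\ x < y, y < z, z < m.+1, g s z < g s x & g s x < g s y].
Proof.
case/containsP => f [H1 H2 H3].
exists (f 0), (f 1), (f 2); split.
- exact: H2.
- exact: H2.
- exact: H1.
- by rewrite H3.
- by rewrite H3.
Qed.

Lemma d3142 m (s : {perm 'I_m.+1}) : contains s [:: 3; 1; 4; 2] ->
  exists x y z w, [/\ x < y, y < z, z < w, w < m.+1 &
     [/\ g s y < g s w, g s w < g s x & g s x < g s z]].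
Proof.
case/containsP => f [H1 H2 H3].
exists (f 0), (f 1), (f 2), (f 3); split.
- exact: H2.
- exact: H2.
- exact: H2.
- exact: H1.
- by split; rewrite H3.
Qed.

Lemma fish_viol m (s : {perm 'I_m.+1}) i j :
  i.+1 < m.+1 -> i < j -> j < m.+1 -> g s j < g s i -> g s i < g s i.+1 ->
  g s i = (g s j).+1 -> fishburn s = false.
Proof.
move=> h1 h2 h3 e1 e2 e3; rewrite /fishburn; apply/negbF/existsP.
have hi : i < m.+1 by lia.
exists (inord i); apply/existsP; exists (inord j); apply/existsP; exists (inord i.+1).
rewrite !inordK //; apply/and5P; split => //.
- by rewrite /= !inordK.
- by apply/eqP.
Qed.

Lemma fish_dest m (s : {perm 'I_m.+1}) : fishburn s = false ->
  exists i j, [/\ i < j, j < m.+1, i.+1 < m.+1, g s j < g s i & g s i < g s i.+1 /\ g s i = (g s j).+1].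
Proof.
rewrite /fishburn => /negbFE/existsP[i /existsP[j /existsP[i1 /and5P[h1 /eqP h2 h3 h4 /eqP h5]]]].
exists (val i), (val j); rewrite /g !inord_val -h2 inord_val; split => //. all: try exact: ltn_ord. by rewrite h2.
Qed.

Lemma asc (f : nat -> nat) x y : x < y -> f x < f y -> exists i, [/\ x <= i, i < y & f i < f i.+1].
Proof.
elim: y => [//|y IH] hxy hf.
have [hlt|hge] := ltnP x y; last first.
  have e : x = y by lia.
  by subst x; exists y; split.
case: (ltnP (f y) (f y.+1)) => hy.
- by exists y; split => //; lia.
- have [i [? ? ?]] := IH hlt (leq_trans hf hy).
  by exists i; split => //; lia.
Qed.

Lemma stepA m (s : {perm 'I_m.+1}) x y c k :
  ~~ contains s [:: 3; 1; 4; 2] ->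
  x < y -> y < c -> c < m.+1 -> g s c < g s x -> g s x < g s y ->
  x <= k -> k <= y -> g s c < g s k.
Proof.
move=> h4 h1 h2 h3 e1 e2 k1 k2.
have [->|kx] := eqVneq k x; first by [].
have [->|ky] := eqVneq k y; first lia.
rewrite ltnNge; apply/negP => hkc.
have hne : g s k != g s c.
  apply/eqP => /g_inj; lia.
have hk : g s k < g s c by lia.
move/negP: h4; apply; apply: (c3142 (x:=x) (y:=k) (z:=y) (w:=c)); lia.
Qed.

Lemma claim m (s : {perm 'I_m.+1}) :
  fishburn s -> ~~ contains s [:: 3; 2; 1] -> ~~ contains s [:: 3; 1; 4; 2] ->
  forall v i c, c < m.+1 -> i.+1 < c -> g s c < g s i -> g s i < g s i.+1 -> g s i = v -> False.
Proof.
move=> hf h321 h3142 v; elim/ltn_ind: v => v IH i c hc hic e1 e2 ev.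
have hgi := g_lt s i.
have [j hj ej] : exists2 j, j < m.+1 & g s j = (g s i).-1 by apply: g_surj; lia.
have [hij|hji|hij] := ltngtP i j.
- suff: fishburn s = false by rewrite hf.
  apply: (fish_viol (i:=i) (j:=j)); lia.
- have hne : g s c != g s j.
    apply/eqP => /g_inj; lia.
  have hcj : g s c < g s j by lia.
  have A := stepA h3142 (x:=j) (y:=i.+1) (c:=c).
  have hjj : g s j < g s j.+1.
    have [e|ne] := eqVneq j.+1 i; first by rewrite e; lia.
    rewrite ltnNge; apply/negP => hle.
    have hne2 : g s j.+1 != g s j by apply/eqP => /g_inj; lia.
    have hc1 : g s c < g s j.+1 by apply: A; lia.
    move/negP: h321; apply; apply: (c321 (x:=j) (y:=j.+1) (z:=c)); lia.
  apply: (IH (g s j) _ j c) => //; lia.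
- subst j; lia.
Qed.

Lemma L1 m (s : {perm 'I_m.+1}) : ~~ contains s [:: 2; 3; 1] -> fishburn s.
Proof.
move=> h; case hf: (fishburn s) => //; have [i [j [h1 h2 h3 e1 [e2 e3]]]] := fish_dest hf.
have ne : i.+1 != j by apply/eqP => E; subst j; lia.
move/negP: h => h; exfalso; apply: h; apply: (c231 (x:=i) (y:=i.+1) (z:=j)); lia.
Qed.

Lemma L2 m (s : {perm 'I_m.+1}) :
  fishburn s -> ~~ contains s [:: 3; 2; 1] -> ~~ contains s [:: 3; 1; 4; 2] ->
  ~~ contains s [:: 2; 3; 1].
Proof.
move=> hf h321 h3142; apply/negP => /d231 [x [y [z [h1 h2 h3 e1 e2]]]].
have [i [i1 i2 i3]] := @asc (g s) x y h1 e2.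
have := stepA h3142 h1 h2 h3 e1 e2 (k:=i) i1 (ltnW i2).
move=> hci.
exact: (claim hf h321 h3142 (v := g s i) (i:=i) (c:=z) h3 (leq_ltn_trans i2 h2) hci i3 erefl).
Qed.

Lemma L3 m (s : {perm 'I_m.+1}) sigma :
  sigma \in [:: [:: 1; 3; 2]; [:: 2; 1; 3]; [:: 3; 1; 2]; [:: 3; 1; 4; 2]] ->
  ~~ contains s sigma -> ~~ contains s [:: 3; 1; 4; 2].
Proof.
move=> hs hn; apply/negP => /d3142 [x [y [z [w [h1 h2 h3 h4 [e1 e2 e3]]]]]].
move/negP: hn; apply.
move: hs; rewrite !inE => /or4P[] /eqP ->.
- apply: (c132 (x:=y) (y:=z) (z:=w)); lia.
- apply: (c213 (x:=x) (y:=y) (z:=z)); lia.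
- apply: (c312 (x:=x) (y:=y) (z:=w)); lia.
- apply: (c3142 (x:=x) (y:=y) (z:=z) (w:=w)); lia.
Qed.

Lemma zero_contains (s : {perm 'I_0}) p0 p : contains s (p0 :: p) = false.
Proof. by apply/existsP => -[f _]; case: (f ord0). Qed.

Lemma zero_fish (s : {perm 'I_0}) : fishburn s.
Proof. by apply/existsP => -[[]]. Qed.

Theorem mainTheorem2 :
  forall sigma : seq nat,
    sigma \in [:: [:: 1; 3; 2]; [:: 2; 1; 3]; [:: 3; 1; 2]; [:: 3; 1; 4; 2]] ->
  forall n : nat,
    F_set n [:: [:: 3; 2; 1]; sigma] = S_set n [:: [:: 2; 3; 1]; [:: 3; 2; 1]; sigma].
Proof.
move=> sigma hs [|m]; apply/setP => s; rewrite !inE /=.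
- have [p0 [p ->]] : exists p0 p, sigma = p0 :: p.
    by move: hs; rewrite !inE => /or4P[] /eqP ->; do 2 eexists.
  by rewrite /avoids !zero_contains zero_fish.
- case h321: (avoids s [:: 3; 2; 1]); case hsig: (avoids s sigma); rewrite ?andbF //=.
  rewrite !andbT; apply/idP/idP.
  + move=> hf; apply: L2 => //; exact: L3 hs hsig.
  + exact: L1.
Qed.
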